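(* Let $S$ be a HeyVL program and let $S'$ be a subprogram obtained from $S$ by only erasing (replacing by $\mathtt{skip}$) occurrences of statements that are reductive. Then for all expectations $X,Y$: if $\not\models\{X\}\,S'\,\{Y\}$, then $S'$ is an error-witnessing slice of $S$ with respect to $(X,Y)$. Moreover, $\mathrm{vp}[S](Z)\preceq\mathrm{vp}[S'](Z)$ for every expectation $Z$.
   Context: Expectations are functions $X:\mathsf{States}\to[0,\infty]$ on program states, ordered pointwise ($X\preceq Y$ iff $X(\sigma)\le Y(\sigma)$ for all $\sigma$). HeyVL statements and their verification pre-expectation transformer $\mathrm{vp}[S]$ (mapping expectations to expectations) are: probabilistic assignment $x :\approx p_1\cdot t_1+\dots+p_n\cdot t_n$ (a finite-support distribution) with $\mathrm{vp}(X)=\sum_i p_i\cdot X[x/t_i]$, deterministic assignment $x:=a$ with $\mathrm{vp}(X)=X[x/a]$; $\mathtt{reward}\ a$: $X+a$; $S_1;S_2$: $\mathrm{vp}[S_1](\mathrm{vp}[S_2](X))$; demonic choice $\mathtt{if}(\sqcap)\{S_1\}\mathtt{else}\{S_2\}$: $\min(\mathrm{vp}[S_1](X),\mathrm{vp}[S_2](X))$; angelic choice $\mathtt{if}(\sqcup)$: the pointwise max; $\mathtt{assert}\ Y$: $\min(Y,X)$; $\mathtt{coassert}\ Y$: $\max(Y,X)$; $\mathtt{assume}\ Y$: the expectation equal to $\infty$ where $Y\le X$ and to $X$ elsewhere; $\mathtt{coassume}\ Y$: equal to $0$ where $Y\ge X$ and to $X$ elsewhere; $\mathtt{havoc}\ x$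 / $\mathtt{cohavoc}\ x$: pointwise infimum / supremum of $X$ over all values of $x$; $\mathtt{validate}$: $\infty$ where $X=\infty$, $0$ elsewhere; $\mathtt{covalidate}$: $0$ where $X=0$, $\infty$ elsewhere. $\mathtt{skip}$ has $\mathrm{vp}[\mathtt{skip}](X)=X$. A statement $S$ is reductive if $\mathrm{vp}[S](X)\preceq X$ for all $X$. For a state $\sigma$, write $\sigma\models\{X\}S\{Y\}$ iff $X(\sigma)\le\mathrm{vp}[S](Y)(\sigma)$, and $\models\{X\}S\{Y\}$ iff this holds for all $\sigma$ (i.e. $X\preceq\mathrm{vp}[S](Y)$). A subprogram $P$ of $S$ is an error-witnessing slice of $S$ w.r.t. $(X,Y)$ if (1) $\not\models\{X\}P\{Y\}$ and (2) for every state $\sigma'$, $\sigma'\not\models\{X\}P\{Y\}$ implies $\sigma'\not\models\{X\}S\{Y\}$. *)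

(* Defs.v *)
(* expectations valued in extended reals \bar R (R : realType),
   restricted to nonnegative ones by explicit hypotheses. *)
From HB Require Import structures.
From mathcomp Require Import all_boot all_order all_algebra.
From mathcomp Require Import boolp classical_sets reals constructive_ereal ereal.
Set Implicit Arguments. Unset Strict Implicit. Unset Printing Implicit Defensive.
Import Order.TTheory GRing.Theory Num.Theory.
Local Open Scope ring_scope.
Local Open Scope ereal_scope.
Local Open Scope classical_set_scope.

Section HeyVL.
Context (R : realType) (Var : eqType) (Val : Type).

Definition state := Var -> Val.
Definition expect := state -> \bar R.

Definition upd (s : state) (x : Var) (v : Val) : state :=
  fun y => if y == x then v else s y.

Inductive stmt :=
| Skip
| PAssign (x : Var) (d : seq (R * (state -> Val)))   (* x :~ p1*t1 + ... + pn*tn *)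
| Assign (x : Var) (a : state -> Val)
| Reward (a : expect)
| Seq (S1 S2 : stmt)
| Demonic (S1 S2 : stmt)
| Angelic (S1 S2 : stmt)
| Assert (Y : expect)
| Coassert (Y : expect)
| Assume (Y : expect)
| Coassume (Y : expect)
| Havoc (x : Var)
| Cohavoc (x : Var)
| Validate
| Covalidate.

Definition nonneg (X : expect) : Prop := forall s, 0 <= X s.

Fixpoint wf (S : stmt) : Prop :=
  match S with
  | PAssign _ d => all (fun p => (0 <= p)%R) (map fst d) /\
                   (\sum_(p <- map fst d) p)%R = 1%R
  | Reward a => nonneg a
  | Seq S1 S2 | Demonic S1 S2 | Angelic S1 S2 => wf S1 /\ wf S2
  | Assert Y | Coassert Y | Assume Y | Coassume Y => nonneg Y
  | _ => True
  end.

Fixpoint vp (S : stmt) (X : expect) : expect :=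
  match S with
  | Skip => X
  | PAssign x d => fun s => \sum_(pt <- d) ((pt.1)%:E * X (upd s x (pt.2 s)))
  | Assign x a => fun s => X (upd s x (a s))
  | Reward a => fun s => X s + a s
  | Seq S1 S2 => vp S1 (vp S2 X)
  | Demonic S1 S2 => fun s => mine (vp S1 X s) (vp S2 X s)
  | Angelic S1 S2 => fun s => maxe (vp S1 X s) (vp S2 X s)
  | Assert Y => fun s => mine (Y s) (X s)
  | Coassert Y => fun s => maxe (Y s) (X s)
  | Assume Y => fun s => if Y s <= X s then +oo else X s
  | Coassume Y => fun s => if X s <= Y s then 0 else X s
  | Havoc x => fun s => ereal_inf (range (fun v => X (upd s x v)))
  | Cohavoc x => fun s => ereal_sup (range (fun v => X (upd s x v)))
  | Validate => fun s => if X s == +oo then +oo else 0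
  | Covalidate => fun s => if X s == 0 then 0 else +oo
  end.

Definition le_exp (X Y : expect) : Prop := forall s, X s <= Y s.

Definition reductive (S : stmt) : Prop :=
  forall X, nonneg X -> le_exp (vp S X) X.

Definition sat (s : state) (X : expect) (S : stmt) (Y : expect) : Prop :=
  X s <= vp S Y s.

Definition valid (X : expect) (S : stmt) (Y : expect) : Prop :=
  forall s, sat s X S Y.

Inductive erase (keep : stmt -> Prop) : stmt -> stmt -> Prop :=
| er_refl S : erase keep S S
| er_skip S : keep S -> erase keep S Skip
| er_seq S1 S2 T1 T2 : erase keep S1 T1 -> erase keep S2 T2 ->
    erase keep (Seq S1 S2) (Seq T1 T2)
| er_dem S1 S2 T1 T2 : erase keep S1 T1 -> erase keep S2 T2 ->
    erase keep (Demonic S1 S2) (Demonic T1 T2)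
| er_ang S1 S2 T1 T2 : erase keep S1 T1 -> erase keep S2 T2 ->
    erase keep (Angelic S1 S2) (Angelic T1 T2).

Definition subprogram (P S : stmt) : Prop := erase (fun _ => True) S P.

Definition error_witnessing_slice (S P : stmt) (X Y : expect) : Prop :=
  [/\ subprogram P S,
      ~ valid X P Y &
      forall s, ~ sat s X P Y -> ~ sat s X S Y].

End HeyVL.

(* Main.v *)
Require Import Defs.
From mathcomp Require Import all_boot all_order all_algebra.
From mathcomp Require Import boolp classical_sets reals constructive_ereal ereal.
Import Order.TTheory GRing.Theory Num.Theory.

Set Implicit Arguments. Unset Strict Implicit.
Local Open Scope ereal_scope.
Local Open Scope classical_set_scope.

Section Aux.
Context (R : realType) (Var : eqType) (Val : Type).

Lemma erase_wf keep (S T : stmt R Var Val) : erase keep S T -> wf S -> wf T.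
Proof.
elim=> //= [S1 S2 T1 T2 _ IH1 _ IH2 [/IH1 ? /IH2 ?]|S1 S2 T1 T2 _ IH1 _ IH2 [/IH1 ? /IH2 ?]
  |S1 S2 T1 T2 _ IH1 _ IH2 [/IH1 ? /IH2 ?]]; by split.
Qed.

Lemma erase_sub keep (S T : stmt R Var Val) : erase keep S T -> subprogram T S.
Proof.
rewrite /subprogram; elim=> *; by constructor.
Qed.

Lemma vp_nonneg (S : stmt R Var Val) X : wf S -> nonneg X -> nonneg (vp S X).
Proof.
elim: S X => /=.
- by [].
- move=> x d X [H1 _] HX s /=; elim: d H1 => [|pt d IH] /=.
    by rewrite big_nil.
  move=> /andP[h1 h2]; rewrite big_cons; apply: adde_ge0; last exact: IH.
  by apply: mule_ge0.
- by move=> x a X _ HX s.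
- by move=> a X Ha HX s; apply: adde_ge0.
- by move=> S1 IH1 S2 IH2 X [W1 W2] HX; apply: IH1 => //; apply: IH2.
- by move=> S1 IH1 S2 IH2 X [W1 W2] HX s; rewrite le_min IH1 ?IH2.
- by move=> S1 IH1 S2 IH2 X [W1 W2] HX s; rewrite le_max IH1 ?IH2.
- by move=> Y X HY HX s; rewrite le_min HY HX.
- by move=> Y X HY HX s; rewrite le_max HY HX.
- by move=> Y X HY HX s; case: ifP.
- by move=> Y X HY HX s; case: ifP.
- move=> x X _ HX s; apply: le_ereal_inf_tmp => _ [v _ <-]; exact: HX.
- move=> x X _ HX s; apply: le_ereal_sup_tmp; exists (X (upd s x (s x))) => //.
- by move=> X _ HX s; case: ifP.
- by move=> X _ HX s; case: ifP.
Qed.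

Lemma vp_mono (S : stmt R Var Val) X Y : wf S -> nonneg X -> le_exp X Y ->
  le_exp (vp S X) (vp S Y).
Proof.
elim: S X Y => /=.
- by [].
- move=> x d X Y [H1 _] HX XY s /=; elim: d H1 => [|pt d IH] /=.
    by rewrite !big_nil.
  move=> /andP[h1 h2]; rewrite !big_cons; apply: leeD; last exact: IH.
  by apply: lee_wpmul2l.
- by move=> x a X Y _ HX XY s.
- by move=> a X Y Ha HX XY s; apply: leeD2r.
- move=> S1 IH1 S2 IH2 X Y [W1 W2] HX XY; apply: IH1 => //.
    exact: vp_nonneg.
  exact: IH2.
- move=> S1 IH1 S2 IH2 X Y [W1 W2] HX XY s; rewrite le_min !ge_min.
  by rewrite IH1 // IH2 // orbT.
- move=> S1 IH1 S2 IH2 X Y [W1 W2] HX XY s; rewrite ge_max !le_max.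
  by rewrite IH1 // IH2 // orbT.
- move=> Z X Y HZ HX XY s; rewrite le_min !ge_min lexx /=.
  by rewrite XY orbT.
- move=> Z X Y HZ HX XY s; rewrite ge_max !le_max lexx /=.
  by rewrite XY orbT.
- move=> Z X Y HZ HX XY s; case: ifP => h1; case: ifP => h2 //.
  + by rewrite (le_trans h1 (XY s)) in h2.
  + by rewrite leey.
- move=> Z X Y HZ HX XY s; case: ifP => h1; case: ifP => h2 //.
  + by apply: (le_trans (HX s)).
  + by rewrite (le_trans (XY s) h2) in h1.
- move=> x X Y _ HX XY s; apply: le_ereal_inf_tmp => _ [v _ <-].
  apply: ge_ereal_inf; exists (X (upd s x v)) => //; by exists v.
- move=> x X Y _ HX XY s; apply: ge_ereal_sup => _ [v _ <-].
  apply: le_ereal_sup_tmp; exists (Y (upd s x v)) => //; by exists v.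
- move=> X Y _ HX XY s; case: ifP => /eqP h1; case: ifP => /eqP h2 //.
  by move: (XY s); rewrite h1 leye_eq => /eqP.
- move=> X Y _ HX XY s; case: ifP => /eqP h1; case: ifP => /eqP h2 //.
  by case: h1; apply/eqP; rewrite eq_le HX andbT -h2 XY.
Qed.

Lemma erase_le (S T : stmt R Var Val) : erase (@reductive R Var Val) S T -> wf S ->
  forall Z, nonneg Z -> le_exp (vp S Z) (vp T Z).
Proof.
elim=> /=.
- by move=> S0 _ Z _ s.
- by move=> S0 Hr _ Z HZ; apply: Hr.
- move=> S1 S2 T1 T2 E1 IH1 E2 IH2 [W1 W2] Z HZ s.
  apply: (@le_trans _ _ (vp T1 (vp S2 Z) s)); first exact: (IH1 W1 (vp S2 Z) (vp_nonneg W2 HZ) s).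
  have WT1 : wf T1 := erase_wf E1 W1.
  have NS := vp_nonneg W2 HZ.
  have L2 : le_exp (vp S2 Z) (vp T2 Z) := IH2 W2 Z HZ.
  exact: (vp_mono WT1 NS L2 s).
- move=> S1 S2 T1 T2 E1 IH1 E2 IH2 [W1 W2] Z HZ s; rewrite le_min !ge_min.
  by rewrite IH1 // IH2 // orbT.
- move=> S1 S2 T1 T2 E1 IH1 E2 IH2 [W1 W2] Z HZ s; rewrite ge_max !le_max.
  by rewrite IH1 // IH2 // orbT.
Qed.

End Aux.

Theorem theorem2 (R : realType) (Var : eqType) (Val : Type)
    (S S' : stmt R Var Val) :
  wf S -> erase (@reductive R Var Val) S S' ->
  (forall X Y : expect R Var Val, nonneg X -> nonneg Y ->
     ~ valid X S' Y -> error_witnessing_slice S S' X Y) /\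
  (forall Z : expect R Var Val, nonneg Z -> le_exp (vp S Z) (vp S' Z)).
Proof.
move=> W E.
have LE : forall Z : expect R Var Val, nonneg Z -> le_exp (vp S Z) (vp S' Z).
  move=> Z HZ; exact: (erase_le E W HZ).
split; last exact: LE.
move=> X Y HX HY NV; split.
- exact: (erase_sub E).
- exact: NV.
- move=> s ns hs; apply: ns; rewrite /sat in hs *.
  exact: (le_trans hs (LE Y HY s)).
Qed.
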